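(* Let $\mathbb{M}$ be a weight sequence with sequence of quotients $\mathbf{m}$. Then (i) $\alpha(\nu_{\mathbf{m}})\ge\alpha(\omega_{\mathbb{M}})$, and (ii) $\beta(\nu_{\mathbf{m}})=\beta(\omega_{\mathbb{M}})$.
   Context: A weight sequence is $\mathbb{M}=(M_p)_{p\in\mathbb{N}_0}$ of positive reals with $M_0=1$, $M_p^2\le M_{p-1}M_{p+1}$ ($p\ge1$) and $M_p^{1/p}\to\infty$; $m_p=M_{p+1}/M_p$. $\omega_{\mathbb{M}}(t):=\sup_{p\in\mathbb{N}_0}\log(t^p/M_p)$ for $t>0$, $\omega_{\mathbb{M}}(0)=0$; $\nu_{\mathbf{m}}(t):=\#\{j\in\mathbb{N}_0:m_j\le t\}$ for $t>0$. For a positive measurable $f$ on $[A,\infty)$: $\alpha(f):=\inf\{\alpha:\exists C_\alpha>0\ \forall\Lambda>1,\ \limsup_{x\to\infty}\sup_{\lambda\in[1,\Lambda]}\frac{f(\lambda x)}{\lambda^{\alpha}f(x)}\le C_\alpha\}$ and $\beta(f):=\sup\{\beta:\exists D_\beta>0\ \forall\Lambda>1,\ \liminf_{x\to\infty}\inf_{\lambda\in[1,\Lambda]}\frac{f(\lambda x)}{\lambda^{\beta}f(x)}\ge D_\beta\}$ (with $\inf\emptyset=\infty$); for $\omega_{\mathbb{M}}$ and $\nu_{\mathbf{m}}$ these are computed on any interval $[A,\infty)$, $A>0$, where the function is positive. *)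

(* Defs.v *)
From HB Require Import structures.
From mathcomp Require Import all_boot all_order all_algebra.
From mathcomp Require Import all_classical all_reals all_analysis.
Set Implicit Arguments. Unset Strict Implicit. Unset Printing Implicit Defensive.
Import Order.TTheory GRing.Theory Num.Theory.
Import numFieldNormedType.Exports.
Local Open Scope classical_set_scope.
Local Open Scope ring_scope.

Definition weight_seq (R : realType) (M : nat -> R) : Prop :=
  [/\ M 0%N = 1,
      (forall p, 0 < M p),
      (forall p, (1 <= p)%N -> M p ^+ 2 <= M p.-1 * M p.+1)
    & (fun p : nat => M p `^ (p%:R)^-1) @ \oo --> +oo].

Definition quot_seq (R : realType) (M : nat -> R) : nat -> R :=
  fun p => M p.+1 / M p.

Definition omegaM (R : realType) (M : nat -> R) (t : R) : R :=
  if 0 < t then sup [set ln (t ^+ p / M p) | p in [set: nat]] else 0.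

Definition nu_m (R : realType) (m : nat -> R) (t : R) : R :=
  fine (counting [set j : nat | m j <= t]).

(* The set of admissible alpha's:
   exists C > 0, forall Lambda > 1,
   limsup_{x -> oo} sup_{lambda in [1,Lambda]} f(lambda x)/(lambda^alpha f(x)) <= C,
   with "limsup_{x->oo} g(x) <= C" written out as
   forall eps > 0, eventually (for x near +oo) g(x) <= C + eps,
   and "sup_{lambda in [1,Lambda]} h(lambda) <= c" as forall lambda in [1,Lambda], h lambda <= c. *)
Definition alpha_set (R : realType) (f : R -> R) : set R :=
  [set a : R | exists2 C : R, 0 < C &
     forall Lam : R, 1 < Lam -> forall eps : R, 0 < eps ->
       \forall x \near +oo%R, forall lam : R, 1 <= lam <= Lam ->
          f (lam * x) / (lam `^ a * f x) <= C + eps].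

(* The set of admissible beta's (liminf of the inf >= D, written out). *)
Definition beta_set (R : realType) (f : R -> R) : set R :=
  [set b : R | exists2 D : R, 0 < D &
     forall Lam : R, 1 < Lam -> forall eps : R, 0 < eps ->
       \forall x \near +oo%R, forall lam : R, 1 <= lam <= Lam ->
          D - eps <= f (lam * x) / (lam `^ b * f x)].

(* alpha(f) = inf of alpha_set (inf of empty = +oo), beta(f) = sup of beta_set *)
Definition alpha_idx (R : realType) (f : R -> R) : \bar R :=
  ereal_inf [set a%:E | a in alpha_set f].
Definition beta_idx (R : realType) (f : R -> R) : \bar R :=
  ereal_sup [set b%:E | b in beta_set f].

(* Main.v *)
Require Import Defs.
From mathcomp Require Import all_boot all_order all_algebra.
From mathcomp Require Import all_classical all_reals all_analysis.
From mathcomp Require Import lra ring.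
Import Order.TTheory GRing.Theory Num.Theory.
Local Open Scope classical_set_scope.
Local Open Scope ring_scope.

Section PartA.
Variables (R : realType) (M : nat -> R).
Hypothesis HM : weight_seq M.

Let m := quot_seq M.

Lemma M_pos p : 0 < M p.
Proof. by case: HM. Qed.

Lemma m_pos p : 0 < m p.
Proof. by rewrite /m /quot_seq divr_gt0 // M_pos. Qed.

Lemma M_S p : M p.+1 = M p * m p.
Proof. by rewrite /m /quot_seq mulrC divfK // gt_eqF // M_pos. Qed.

Lemma m_incr p : m p <= m p.+1.
Proof.
case: HM => _ _ H3 _.
have := H3 p.+1 isT; rewrite /= /m /quot_seq.
have h0 := M_pos p; have h1 := M_pos p.+1; have h2 := M_pos p.+2.
rewrite ler_pdivrMr // mulrAC ler_pdivlMr //.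
by rewrite [M p * _]mulrC expr2.
Qed.

Lemma m_mono i j : (i <= j)%N -> m i <= m j.
Proof.
move=> /subnK <-; elim: (j - i)%N => [|k IH]; first by rewrite add0n.
by rewrite addSn; apply: le_trans IH (m_incr _).
Qed.

Lemma m_unbounded t : exists p, t < m p.
Proof.
apply: contrapT => /forallNP Hall.
have Hle p : m p <= t by have := Hall p; move/negP; rewrite -leNgt.
have t0 : 0 < t by apply: lt_le_trans (m_pos 0) (Hle 0%N).
have HMt p : M p <= t ^+ p.
  elim: p => [|p IH]; first by case: HM => ->.
  rewrite M_S exprSr; apply: ler_pM => //; [exact/ltW/M_pos|exact/ltW/m_pos].
case: HM => _ _ _ /cvgryPgt/(_ t) [N _ HN].
have := HN N.+1 (leqnSn _) => /=.
apply/negP; rewrite -leNgt.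
have -> : t = (t ^+ N.+1) `^ (N.+1%:R)^-1.
  rewrite -powR_mulrn ?ltW // -powRrM mulfV ?powRr1 ?ltW //.
apply: ge0_ler_powR => //.
- by rewrite nnegrE ltW // M_pos.
- by rewrite nnegrE exprn_ge0 // ltW.
Qed.

Definition Nt t := ex_minn (m_unbounded t).

Lemma Nt_spec t j : (j < Nt t)%N = (m j <= t).
Proof.
rewrite /Nt; case: ex_minnP => n Hn Hmin.
apply/idP/idP => H.
  rewrite leNgt; apply/negP => /Hmin; rewrite leqNgt H //.
rewrite ltnNge; apply/negP => Hnj.
by have := lt_le_trans Hn (m_mono _ _ Hnj); rewrite ltNge H.
Qed.

Lemma Nt_mono s t : s <= t -> (Nt s <= Nt t)%N.
Proof.
move=> st; rewrite leqNgt; apply/negP; rewrite Nt_spec => H.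
have : (Nt t < Nt t)%N by rewrite Nt_spec; apply: le_trans H st.
by rewrite ltnn.
Qed.

Lemma nu_eq t : nu_m m t = (Nt t)%:R.
Proof.
rewrite /nu_m.
have -> : [set j | m j <= t] = `I_(Nt t).
  by apply/seteqP; split => j /=; rewrite Nt_spec.
by rewrite /counting asboolT ?finite_II // (card_fset_set (card_eqxx _)).
Qed.


Definition aa t p := t ^+ p / M p.

Lemma aa_S t p : aa t p.+1 = aa t p * (t / m p).
Proof. by rewrite /aa M_S exprSr invfM mulrACA. Qed.

Lemma aa_pos t p : 0 < t -> 0 < aa t p.
Proof. by move=> t0; rewrite /aa divr_gt0 ?exprn_gt0 ?M_pos. Qed.

Lemma aa_max t p : 0 < t -> aa t p <= aa t (Nt t).
Proof.
move=> t0.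
have up k i : (i + k <= Nt t)%N -> aa t i <= aa t (i + k).
  elim: k => [|k IH] Hk; first by rewrite addn0.
  have Hk' : (i + k < Nt t)%N by rewrite addnS in Hk.
  apply: le_trans (IH (ltnW Hk')) _.
  rewrite addnS aa_S ler_pMr ?aa_pos //.
  by rewrite ler_pdivlMr ?m_pos // mul1r -Nt_spec.
have down k : aa t (Nt t + k) <= aa t (Nt t).
  elim: k => [|k IH]; first by rewrite addn0.
  apply: le_trans IH; rewrite addnS aa_S ger_pMr ?aa_pos //.
  rewrite ler_pdivrMr ?m_pos // mul1r ltW //.
  by rewrite ltNge -Nt_spec -leqNgt leq_addr.
case: (leqP p (Nt t)) => Hp.
  by have := up (Nt t - p)%N p; rewrite subnKC //; apply.
by have := down (p - Nt t)%N; rewrite subnKC // ltnW.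
Qed.

Lemma omega_eq t : 0 < t -> omegaM M t = ln (aa t (Nt t)).
Proof.
move=> t0; rewrite /omegaM t0.
have ub : ubound [set ln (t ^+ p / M p) | p in [set: nat]] (ln (aa t (Nt t))).
  move=> _ [p _ <-]; rewrite ler_ln ?posrE ?aa_pos //.
  exact: aa_max.
apply/le_anti/andP; split.
  by apply: ge_sup => //; exists (ln (aa t 0)), 0%N.
by apply: ub_le_sup; [exists (ln (aa t (Nt t))) | exists (Nt t)].
Qed.

Lemma omega_ge t p : 0 < t -> ln (aa t p) <= omegaM M t.
Proof.
move=> t0; rewrite omega_eq // ler_ln ?posrE ?aa_pos //; exact: aa_max.
Qed.

Lemma omega_ge0 t : 0 <= omegaM M t.
Proof.
case: (ltP 0 t) => t0; last by rewrite /omegaM ltNge t0.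
apply: le_trans (omega_ge _ 0 t0).
by rewrite /aa expr0; case: HM => -> _ _ _; rewrite divr1 ln1.
Qed.

Lemma ln_aa_scale l y p : 0 < l -> 0 < y ->
  ln (aa (l * y) p) = p%:R * ln l + ln (aa y p).
Proof.
move=> l0 y0; rewrite /aa exprMn -mulrA lnM ?posrE ?exprn_gt0 //.
  by rewrite lnXn // mulr_natl.
by rewrite divr_gt0 ?exprn_gt0 ?M_pos.
Qed.

Lemma H1l y l : 0 < y -> 1 <= l ->
  omegaM M y + nu_m m y * ln l <= omegaM M (l * y).
Proof.
move=> y0 l1; have l0 : 0 < l by apply: lt_le_trans l1.
apply: le_trans (omega_ge _ (Nt y) (mulr_gt0 l0 y0)).
by rewrite ln_aa_scale // nu_eq omega_eq // addrC mulrC.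
Qed.

Lemma H1u y l : 0 < y -> 1 <= l ->
  omegaM M (l * y) <= omegaM M y + nu_m m (l * y) * ln l.
Proof.
move=> y0 l1; have l0 : 0 < l by apply: lt_le_trans l1.
have := omega_ge _ (Nt (l * y)) y0.
rewrite nu_eq (omega_eq _ (mulr_gt0 l0 y0)) ln_aa_scale // => H.
lra.
Qed.

Lemma nu_ge0 t : 0 <= nu_m m t.
Proof. by rewrite nu_eq. Qed.

Lemma nu_mono s t : s <= t -> nu_m m s <= nu_m m t.
Proof. by move=> st; rewrite !nu_eq ler_nat Nt_mono. Qed.

Lemma nu_inf K : exists X, forall x, X < x -> K <= nu_m m x.
Proof.
have [n Hn] : exists n : nat, K <= n%:R.
  exists (Num.Def.archi_bound `|K|).
  by apply: le_trans (ler_norm K) (ltW (archi_boundP _)).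
exists (m n) => x Hx; rewrite nu_eq; apply: le_trans Hn _.
by rewrite ler_nat; apply: ltnW; rewrite Nt_spec ltW.
Qed.

End PartA.

Section Gen.
Context {R : realType}.

Lemma mulr_le_r {x y z : R} : 0 <= z -> x <= y -> x * z <= y * z.
Proof. by move=> z0 xy; apply: ler_wpM2r. Qed.

Lemma mulr_le_l {x y z : R} : 0 <= z -> x <= y -> z * x <= z * y.
Proof. by move=> z0 xy; apply: ler_wpM2l. Qed.

Lemma near_oo_ex {P : R -> Prop} :
  (\forall x \near +oo, P x) -> exists2 X, 0 < X & forall x, X < x -> P x.
Proof.
case=> X [_ HX]; exists (Num.max X 1); first by rewrite lt_max ltr01 orbT.
by move=> x; rewrite gt_max => /andP[/HX].
Qed.

Lemma ex_near_oo {P : R -> Prop} :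
  (exists X, forall x, X < x -> P x) -> \forall x \near +oo, P x.
Proof. by case=> X HX; exists X; split => //; exact: num_real. Qed.

Lemma powR_ge1 (l r : R) : 1 <= l -> 0 <= r -> 1 <= l `^ r.
Proof.
move=> l1 r0; have -> : 1 = (1 : R) `^ r by rewrite powR1.
by apply: ge0_ler_powR; rewrite // nnegrE // (le_trans ler01).
Qed.

Lemma powR_le1 (l r : R) : 1 <= l -> r <= 0 -> l `^ r <= 1.
Proof.
move=> l1 r0; rewrite -(opprK r) powRN invf_le1 ?powR_ge1 ?oppr_ge0 //.
by rewrite powR_gt0 // (lt_le_trans ltr01).
Qed.

Lemma powR_base_le (x y r : R) : 0 <= r -> 0 <= x -> x <= y -> x `^ r <= y `^ r.
Proof.
move=> r0 x0 xy; apply: ge0_ler_powR; rewrite // nnegrE //.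
exact: le_trans xy.
Qed.

Lemma powR_div (x y r : R) : 0 < x -> 0 < y -> (x / y) `^ r = x `^ r / y `^ r.
Proof.
move=> x0 y0; have := @powRM _ (x / y) y r.
rewrite divfK ?gt_eqF // => ->; rewrite ?divr_ge0 ?ltW //.
by rewrite mulfK // gt_eqF // powR_gt0.
Qed.

Lemma exists_mu (b c : R) : 0 < b -> exists mu, 1 < mu /\ c <= mu `^ b.
Proof.
move=> b0; set z := `|c| `^ b^-1.
have z0 : 0 <= z by exact: powR_ge0.
exists (2 + z); split; first lra.
apply: (le_trans (ler_norm c)); apply: (@le_trans _ _ (z `^ b)).
  by rewrite /z -powRrM mulVf ?gt_eqF // powRr1.
by apply: powR_base_le => //; [exact: ltW | lra].
Qed.

Lemma beta_intro (h : R -> R) b :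
  (exists2 D, 0 < D & forall Lam, 1 < Lam -> exists X, forall x, X < x ->
     0 < h x /\ forall lam, 1 <= lam <= Lam -> D * (lam `^ b * h x) <= h (lam * x))
  -> beta_set h b.
Proof.
case=> D D0 H; exists D => // Lam Lam1 eps eps0.
have [X HX] := H Lam Lam1; apply: ex_near_oo; exists X => x /HX [hx Hl] lam Hlam.
have l0 : 0 < lam by case/andP: Hlam => /(lt_le_trans ltr01).
apply: (@le_trans _ _ D); first lra.
by rewrite ler_pdivlMr ?mulr_gt0 ?powR_gt0 // Hl.
Qed.

Lemma beta_elim (h : R -> R) b : beta_set h b ->
  exists2 D, 0 < D & forall Lam, 1 < Lam -> exists2 X, 0 < X & forall x, X < x ->
     0 < h x -> forall lam, 1 <= lam <= Lam -> D * (lam `^ b * h x) <= h (lam * x).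
Proof.
case=> D D0 H; exists (D / 2); first by rewrite divr_gt0.
move=> Lam Lam1; have [X X0 HX] := near_oo_ex (H Lam Lam1 (D/2) (divr_gt0 D0 (ltr0Sn _ 1))).
exists X => // x xX hx lam Hlam.
have l0 : 0 < lam by case/andP: Hlam => /(lt_le_trans ltr01).
have := HX x xX lam Hlam; have -> : D - D / 2 = D / 2 by lra.
by rewrite ler_pdivlMr ?mulr_gt0 ?powR_gt0.
Qed.

Lemma alpha_intro (h : R -> R) a :
  (exists2 C, 0 < C & forall Lam, 1 < Lam -> exists X, forall x, X < x ->
     0 < h x /\ forall lam, 1 <= lam <= Lam -> h (lam * x) <= C * (lam `^ a * h x))
  -> alpha_set h a.
Proof.
case=> C C0 H; exists C => // Lam Lam1 eps eps0.
have [X HX] := H Lam Lam1; apply: ex_near_oo; exists X => x /HX [hx Hl] lam Hlam.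
have l0 : 0 < lam by case/andP: Hlam => /(lt_le_trans ltr01).
apply: (@le_trans _ _ C); last lra.
by rewrite ler_pdivrMr ?mulr_gt0 ?powR_gt0 // Hl.
Qed.

Lemma alpha_elim (h : R -> R) a : alpha_set h a ->
  exists2 C, 0 < C & forall Lam, 1 < Lam -> exists2 X, 0 < X & forall x, X < x ->
     0 < h x -> forall lam, 1 <= lam <= Lam -> h (lam * x) <= C * (lam `^ a * h x).
Proof.
case=> C C0 H; exists (C + 1); first lra.
move=> Lam Lam1; have [X X0 HX] := near_oo_ex (H Lam Lam1 1 ltr01).
exists X => // x xX hx lam Hlam.
have l0 : 0 < lam by case/andP: Hlam => /(lt_le_trans ltr01).
by have := HX x xX lam Hlam; rewrite ler_pdivrMr ?mulr_gt0 ?powR_gt0.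
Qed.

End Gen.

Section Gen2.
Context {R : realType}.

Lemma beta_nonpos (h : R -> R) b :
  (forall x l, 0 < x -> 1 <= l -> h x <= h (l * x)) ->
  (exists2 X, 0 < X & forall x, X < x -> 0 < h x) -> b <= 0 -> beta_set h b.
Proof.
move=> hm [X X0 HX] b0; apply: beta_intro; exists 1 => // Lam _.
exists X => x xX; split; first exact: HX.
move=> lam /andP[l1 _]; rewrite mul1r.
have x0 : 0 < x by apply: lt_trans xX.
apply: le_trans (hm _ _ x0 l1); apply: ler_piMl; first exact/ltW/HX.
exact: powR_le1.
Qed.

Lemma alpha_ge0 (h : R -> R) a :
  (forall x l, 0 < x -> 1 <= l -> h x <= h (l * x)) ->
  (exists2 X, 0 < X & forall x, X < x -> 0 < h x) -> alpha_set h a -> 0 <= a.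
Proof.
move=> hm [X X0 HX] /alpha_elim [C C0 HC].
rewrite leNgt; apply/negP => a0.
set Lam := (C + 1) `^ (- a)^-1.
have LamE : Lam `^ (- a) = C + 1.
  by rewrite /Lam -powRrM mulVf ?powRr1 ?oppr_eq0 ?lt_eqF //; lra.
have Lam1 : 1 < Lam.
  rewrite ltNge; apply/negP => L1.
  have : Lam `^ (- a) <= 1 `^ (- a).
    by apply: powR_base_le; rewrite ?powR_ge0 //; lra.
  rewrite LamE powR1; lra.
have [Y Y0 HY] := HC Lam Lam1.
set x := X + Y + 1.
have xX : X < x by rewrite /x; lra.
have xY : Y < x by rewrite /x; lra.
have hx := HX x xX.
have := HY x xY hx Lam; rewrite lexx ltW // => /(_ isT) H.
have x0 : 0 < x by apply: lt_trans xX.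
have H2 := hm x Lam x0 (ltW Lam1).
have Lama : Lam `^ a = (C + 1)^-1 by rewrite -LamE -powRN opprK.
rewrite Lama in H.
have : h x <= C / (C + 1) * h x by rewrite -mulrA; exact: le_trans H2 H.
rewrite -{1}(mul1r (h x)) ler_pM2r // ler_pdivlMr; lra.
Qed.

Lemma fin_ineq (Pm Lb hx hl c : R) : 0 < Pm -> 0 <= Lb -> 0 <= hx -> 0 < c ->
  (c * (Lb / Pm) * hx <= hl \/ (hx <= hl /\ Lb <= Pm)) ->
  Num.min 1 c / Pm * (Lb * hx) <= hl.
Proof.
move=> P0 L0 h0 c0 H.
have -> : Num.min 1 c / Pm * (Lb * hx) = Num.min 1 c * ((Lb / Pm) * hx).
  by ring.
have q0 : 0 <= Lb / Pm * hx.
  by apply: mulr_ge0 => //; apply: divr_ge0 => //; exact: ltW.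
case: H => [H|[H1 H2]].
  apply: le_trans H; rewrite -[c * (Lb / Pm) * hx]mulrA; apply: ler_wpM2r => //.
  by rewrite ge_min lexx orbT.
apply: (@le_trans _ _ (1 * ((Lb / Pm) * hx))).
  by apply: ler_wpM2r => //; rewrite ge_min lexx.
rewrite mul1r; apply: le_trans H1; apply: ler_piMl => //.
by rewrite ler_pdivrMr // mul1r.
Qed.

Lemma pow_unbounded (mu c : R) : 1 < mu -> exists n : nat, c <= mu ^+ n.
Proof.
move=> mu1.
have bern n : 1 + n%:R * (mu - 1) <= mu ^+ n.
  elim: n => [|n IH]; first by rewrite mul0r addr0 expr0.
  rewrite exprS; apply: (@le_trans _ _ (mu * (1 + n%:R * (mu - 1)))).
    have m0 : 0 <= mu - 1 by lra.
    have := mulr_ge0 (mulr_ge0 (ler0n _ n) m0) m0.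
    rewrite -natr1 mulrDl mul1r; nra.
  by rewrite ler_wpM2l // ltW // (lt_trans ltr01).
set n := Num.Def.archi_bound (`|c| / (mu - 1)).
exists n; apply: le_trans (bern n).
have h : `|c| / (mu - 1) < n%:R by apply: archi_boundP; rewrite divr_ge0 //; lra.
have : `|c| < n%:R * (mu - 1) by rewrite -ltr_pdivrMr //; lra.
have := ler_norm c; lra.
Qed.

End Gen2.

Section Abstract.
Variable R : realType.
Variables (f g : R -> R).
Hypothesis Hg0 : forall y, 0 <= g y.
Hypothesis Hf0 : forall y, 0 <= f y.
Hypothesis Hgmono : forall x y, x <= y -> g x <= g y.
Hypothesis Hl : forall y l, 0 < y -> 1 <= l -> f y + g y * ln l <= f (l * y).
Hypothesis Hu : forall y l, 0 < y -> 1 <= l -> f (l * y) <= f y + g (l * y) * ln l.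
Hypothesis Hinf : forall K, exists X, forall x, X < x -> K <= g x.

Lemma fmono x y : 0 < x -> x <= y -> f x <= f y.
Proof.
move=> x0 xy; have y0 : 0 < y by apply: lt_le_trans xy.
have l1 : 1 <= y / x by rewrite ler_pdivlMr // mul1r.
have := Hl _ _ x0 l1; rewrite divfK ?gt_eqF //; apply: le_trans.
by rewrite lerDl mulr_ge0 ?ln_ge0.
Qed.

Lemma fmono' x l : 0 < x -> 1 <= l -> f x <= f (l * x).
Proof. by move=> x0 l1; apply: fmono => //; exact: ler_peMl (ltW x0) l1. Qed.

Lemma gmono' x l : 0 < x -> 1 <= l -> g x <= g (l * x).
Proof. by move=> x0 l1; apply: Hgmono; exact: ler_peMl (ltW x0) l1. Qed.

Lemma g_pos_ev : exists2 X, 0 < X & forall x, X < x -> 0 < g x.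
Proof.
have [X HX] := Hinf 1; exists (Num.max X 1); first by rewrite lt_max ltr01 orbT.
by move=> x; rewrite gt_max => /andP[/HX H _]; apply: lt_le_trans H.
Qed.

Lemma g_le_f y mu : 0 < y -> 1 <= mu -> g y * ln mu <= f (mu * y).
Proof. by move=> y0 mu1; apply: le_trans (Hl _ _ y0 mu1); rewrite lerDr. Qed.

Lemma f_pos_ev : exists2 X, 0 < X & forall x, X < x -> 0 < f x.
Proof.
have [X X0 HX] := g_pos_ev; exists (2 * X); first by rewrite mulr_gt0.
move=> x xX; have x0 : 0 < x by apply: lt_trans xX; rewrite mulr_gt0.
have h2 : X < x / 2 by rewrite ltr_pdivlMr //; lra.
have H12 : (1:R) <= 2 by lra.
have := g_le_f (x / 2) 2 (lt_trans X0 h2) H12; rewrite [2 * _]mulrC divfK //.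
apply: lt_le_trans; rewrite mulr_gt0 ?ln_gt0 ?HX //; lra.
Qed.


Lemma alpha_g_f a d : alpha_set g a -> 0 < d -> alpha_set f (a + d).
Proof.
move=> Ha d0.
have a0 : 0 <= a by exact: (@alpha_ge0 R g a gmono' g_pos_ev Ha).
case/alpha_elim: Ha => C C0 HC.
have H12 : (1:R) <= 2 by lra.
have L2 : 0 < ln (2:R) by apply: ln_gt0; lra.
set K := C * 2 `^ a / ln 2.
have K0 : 0 <= K by rewrite /K divr_ge0 ?mulr_ge0 ?powR_ge0 ?ltW.
apply: alpha_intro; exists (1 + C * K / d).
  have hk : 0 <= C * K / d.
    by apply: divr_ge0; [apply: mulr_ge0; [exact: ltW|exact: K0]|exact: ltW].
  lra.
move=> Lam Lam1.
have Lam2 : 1 < 2 * Lam by lra.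
have [X X0 HX] := HC _ Lam2.
have [Xg Xg0 HXg] := g_pos_ev.
have [Xf Xf0 HXf] := f_pos_ev.
exists (2 * (X + Xg + Xf)) => x xT.
have x0 : 0 < x by lra.
have xX : X < x by lra.
have xXg : Xg < x by lra.
have xXf : Xf < x by lra.
have hX2 : X < x / 2 by rewrite ltr_pdivlMr //; lra.
have hXg2 : Xg < x / 2 by rewrite ltr_pdivlMr //; lra.
have gx := HXg x xXg; have fx := HXf x xXf.
split => // lam /andP[l1 lLam].
have l0 : 0 < lam by lra.
have gK : g x <= K * f x.
  have g2 := HXg _ hXg2.
  have H1 := HX (x / 2) hX2 g2 2 (_ : 1 <= 2 <= 2 * Lam).
  have H2 := g_le_f (x / 2) 2 (_ : 0 < x / 2) H12.
  rewrite [2 * (x / 2)]mulrC divfK // in H1 H2.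
  have {H1}H1 := H1 (_ : _); have {H2}H2 := H2 (_ : _).
  apply: le_trans (H1 _) _; first by apply/andP; split; lra.
  have -> : C * (2 `^ a * g (x / 2)) = K * (g (x / 2) * ln 2).
    by rewrite /K; field; rewrite gt_eqF.
  apply: ler_wpM2l => //; apply: H2; lra.
have Hgl := HX x xX gx lam (_ : 1 <= lam <= 2 * Lam).
have {Hgl}Hgl : g (lam * x) <= C * (lam `^ a * g x).
  by apply: Hgl; apply/andP; split; lra.
have Hfl := Hu _ _ x0 l1.
have Lln : 0 <= ln lam := ln_ge0 l1.
have La := powR_gt0 a l0; have Ld := powR_gt0 d l0.
have lnb : ln lam <= lam `^ d / d.
  have := ln_sublinear (powR_gt0 d l0); rewrite ln_powR => H.
  by rewrite ler_pdivlMr // mulrC ltW.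
have E : lam `^ (a + d) = lam `^ a * lam `^ d.
  by rewrite powRD // (gt_eqF l0) implybT.
have one : 1 <= lam `^ (a + d) by apply: powR_ge1 => //; lra.
rewrite E in one *.
have s1 : g (lam * x) * ln lam <= C * (lam `^ a * g x) * ln lam.
  exact: mulr_le_r Lln Hgl.
have s2 : C * (lam `^ a * g x) * ln lam <= C * (lam `^ a * (K * f x)) * ln lam.
  apply: mulr_le_r Lln _; apply: mulr_le_l (ltW C0) _.
  exact: mulr_le_l (ltW La) gK.
have s3 : C * (lam `^ a * (K * f x)) * ln lam <=
          C * (lam `^ a * (K * f x)) * (lam `^ d / d).
  apply: mulr_le_l lnb; apply: mulr_ge0; first exact: ltW.
  apply: mulr_ge0; first exact: ltW.
  by apply: mulr_ge0 => //; exact: ltW.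
have s4 : f x <= lam `^ a * lam `^ d * f x := ler_peMl (ltW fx) one.
have e : C * (lam `^ a * (K * f x)) * (lam `^ d / d) =
         C * K / d * (lam `^ a * lam `^ d * f x).
  by field; rewrite gt_eqF.
rewrite mulrDl mul1r -e; lra.
Qed.


Lemma mu_facts {D b : R} : 0 < D -> 0 < b ->
  exists mu, [/\ 1 < mu, 0 < ln mu, 0 < mu `^ b & 2 <= D * mu `^ b].
Proof.
move=> D0 b0; have [mu [mu1 Hmu]] := @exists_mu R b (2 / D) b0.
exists mu; split => //; first exact: ln_gt0.
  by apply: powR_gt0; lra.
by move: Hmu; rewrite ler_pdivrMr // mulrC.
Qed.

Lemma beta_g_f b : beta_set g b -> 0 < b -> beta_set f b.
Proof.
move=> Hb b0; case/beta_elim: Hb => D D0 HD.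
have [mu [mu1 L0 Pm0 DPm]] := mu_facts D0 b0.
set L := ln mu in L0 *; set Pm := mu `^ b in Pm0 DPm *.
have D30 : 0 < D / 3 by lra.
apply: beta_intro; exists (Num.min 1 (D / 3) / Pm).
  by apply: divr_gt0 => //; rewrite lt_min ltr01.
move=> Lam Lam1.
have Lm1 : 1 < Lam * mu by nra.
have [X X0 HX] := HD _ Lm1.
have [Xg Xg0 HXg] := g_pos_ev.
set X1 := X + Xg.
have X10 : 0 < X1 by rewrite /X1; lra.
have dbl z : X1 < z -> 2 * g z <= g (mu * z).
  move=> zX; have gz := HXg z (_ : Xg < z).
  have {gz}gz := gz ltac:(rewrite /X1 in zX; lra).
  have := HX z (_ : X < z) gz mu (_ : 1 <= mu <= Lam * mu).
  move=> /(_ ltac:(rewrite /X1 in zX; lra)).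
  move=> /(_ ltac:(apply/andP; split; nra)).
  move=> H; apply: le_trans H; rewrite mulrA; apply: mulr_le_r DPm; exact: ltW.
have tele n : forall y, X1 < y -> y <= X1 * mu ^+ n.+1 ->
    f y <= f (X1 * mu) + 2 * L * g y.
  elim: n => [|n IH] y y1 y2.
    rewrite expr1 in y2; apply: le_trans (fmono _ _ (lt_trans X10 y1) y2) _.
    rewrite lerDl; apply: mulr_ge0 => //; apply: mulr_ge0; lra.
  case: (leP y (X1 * mu ^+ n.+1)) => hy; first exact: IH.
  set z := y / mu.
  have yE : y = mu * z by rewrite /z mulrC divfK // gt_eqF //; lra.
  have mun : mu <= mu ^+ n.+1.
    rewrite exprS ler_peMr //; [lra|]; apply: exprn_ege1; lra.
  have zX : X1 < z.
    rewrite /z ltr_pdivlMr; last lra.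
    apply: le_lt_trans hy; rewrite ler_wpM2l //; lra.
  have z2 : z <= X1 * mu ^+ n.+1.
    by rewrite /z ler_pdivrMr ?(lt_trans ltr01) // -mulrA -exprSr.
  have z0 : 0 < z by lra.
  have h1 := IH z zX z2.
  have h2 := Hu _ _ z0 (ltW mu1); rewrite -/L in h2.
  have h3 := mulr_le_l (ltW L0) (dbl z zX).
  rewrite yE; lra.
have [X2 X20 HX2] : exists2 X2, 0 < X2 & forall y, X2 < y -> f y <= 3 * L * g y.
  have [X3 HX3] := Hinf (f (X1 * mu) / L).
  exists (X1 + `|X3|); first by have := normr_ge0 X3; lra.
  move=> y yX; have hX3 := ler_norm X3.
  have [n Hn] := @pow_unbounded R mu (y / X1) mu1.
  have y1 : y <= X1 * mu ^+ n.+1.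
    rewrite exprS mulrCA; apply: (@le_trans _ _ (X1 * mu ^+ n)).
      by move: Hn; rewrite ler_pdivrMr // mulrC.
    rewrite ler_pMl; first lra.
    by rewrite mulr_gt0 // exprn_gt0 //; lra.
  have := tele n y (_ : X1 < y) y1.
  have := HX3 y (_ : X3 < y); rewrite ler_pdivrMr //.
  move=> /(_ ltac:(lra)) h1 /(_ ltac:(have := normr_ge0 X3; lra)) h2.
  lra.
have [Xf Xf0 HXf] := f_pos_ev.
exists (X1 + X2 + Xf) => x xT.
have x0 : 0 < x by lra.
have fx := HXf x ltac:(lra).
have gx := HXg x ltac:(rewrite /X1 in xT X10; lra).
have xX : X < x by rewrite /X1 in xT; lra.
split => // lam /andP[l1 lLam].
have l0 : 0 < lam by lra.
apply: fin_ineq; [exact: Pm0 | exact: powR_ge0 | exact: ltW fx | exact: D30 |].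
case: (ltP lam mu) => hl; [right|left].
  split; first exact: fmono'.
  by apply: powR_base_le; rewrite ?ltW.
set lam' := lam / mu.
have l'1 : 1 <= lam' by rewrite /lam' ler_pdivlMr ?mul1r //; lra.
have l'l : lam' <= lam by rewrite /lam' ler_pdivrMr; [nra|lra].
have H1 := HX x xX gx lam' ltac:(apply/andP; split; nra).
have H2 := g_le_f (lam' * x) mu (mulr_gt0 (lt_le_trans ltr01 l'1) x0) (ltW mu1).
rewrite -/L in H2.
have lamx : mu * (lam' * x) = lam * x.
  by rewrite mulrA /lam' [mu * _]mulrC divfK // gt_eqF //; lra.
rewrite lamx in H2.
have H3 := HX2 x ltac:(lra).
have lamE : lam' `^ b = lam `^ b / Pm by rewrite /lam' powR_div //; lra.
have c0 : 0 <= D / 3 * (lam `^ b / Pm).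
  by apply: mulr_ge0; [lra| apply: divr_ge0; [exact: powR_ge0|lra]].
have s1 := mulr_le_l c0 H3.
have s2 := mulr_le_r (ltW L0) H1.
have e : D / 3 * (lam `^ b / Pm) * (3 * L * g x) = D * (lam' `^ b * g x) * L.
  by rewrite lamE; field; rewrite gt_eqF.
rewrite e in s1; lra.
Qed.


Lemma beta_f_g b : beta_set f b -> 0 < b -> beta_set g b.
Proof.
move=> Hb b0; case/beta_elim: Hb => D D0 HD.
have [mu [mu1 L0 Pm0 DPm]] := mu_facts D0 b0.
set L := ln mu in L0 *; set Pm := mu `^ b in Pm0 DPm *.
have D20 : 0 < D / 2 by lra.
apply: beta_intro; exists (Num.min 1 (D / 2) / Pm).
  by apply: divr_gt0 => //; rewrite lt_min ltr01.
move=> Lam Lam1.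
have Lm1 : 1 < Lam * mu by nra.
have [X X0 HX] := HD _ Lm1.
have [Xg Xg0 HXg] := g_pos_ev.
have [Xf Xf0 HXf] := f_pos_ev.
set X1 := X + Xf.
have X1E : X1 = X + Xf by [].
have X10 : 0 < X1 by lra.
have s1 y : X1 < y / mu -> f y <= 2 * L * g y.
  move=> zX; set z := y / mu in zX.
  have yE : y = mu * z by rewrite /z mulrC divfK // gt_eqF //; lra.
  have z0 : 0 < z by lra.
  have fz := HXf z ltac:(lra).
  have H1 := HX z ltac:(lra) fz mu ltac:(apply/andP; split; nra).
  have H2 := Hu _ _ z0 (ltW mu1); rewrite -/L in H2.
  have H3 := mulr_le_r (ltW fz) DPm; rewrite -/Pm in H1.
  rewrite yE; lra.
exists (X1 * mu + Xg) => x xT.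
have X1m : X1 <= X1 * mu by rewrite ler_peMr //; lra.
have x0 : 0 < x by lra.
have xm : X1 < x / mu.
  by rewrite ltr_pdivlMr; lra.
have gx := HXg x ltac:(lra).
split => // lam /andP[l1 lLam].
have l0 : 0 < lam by lra.
apply: fin_ineq; [exact: Pm0 | exact: powR_ge0 | exact: ltW gx | exact: D20 |].
case: (ltP lam mu) => hl; [right|left].
  split; first exact: gmono'.
  by apply: powR_base_le; rewrite ?ltW.
set lam' := lam / mu.
have l'1 : 1 <= lam' by rewrite /lam' ler_pdivlMr ?mul1r //; lra.
have l'l : lam' <= lam by rewrite /lam' ler_pdivrMr; [nra|lra].
have mx : x <= mu * x by rewrite ler_peMl //; lra.
have fmx := HXf (mu * x) ltac:(lra).
have H1 := HX (mu * x) ltac:(lra) fmx lam'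
  ltac:(apply/andP; split; nra).
have lamx : lam' * (mu * x) = lam * x.
  by rewrite mulrA /lam' divfK // gt_eqF //; lra.
rewrite lamx in H1.
have H2 := s1 (lam * x) ltac:(apply: (lt_le_trans xm); rewrite ler_pdivlMr; [|lra];
  rewrite divfK ?gt_eqF //; [nra|lra]).
have H3 := g_le_f x mu x0 (ltW mu1); rewrite -/L in H3.
have lamE : lam' `^ b = lam `^ b / Pm by rewrite /lam' powR_div //; lra.
have c0 : 0 <= D * (lam `^ b / Pm).
  by apply: mulr_ge0; [lra| apply: divr_ge0; [exact: powR_ge0|lra]].
have s := mulr_le_l c0 H3.
have e1 : D / 2 * (lam `^ b / Pm) * g x * (2 * L) = D * (lam `^ b / Pm) * (g x * L).
  by field; rewrite gt_eqF.
have e2 : D * (lam `^ b / Pm) * f (mu * x) = D * (lam' `^ b * f (mu * x)).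
  by rewrite lamE; ring.
rewrite -(ler_pM2r (_ : 0 < 2 * L)); last lra.
rewrite e1; lra.
Qed.


Lemma alpha_main : (alpha_idx f <= alpha_idx g)%E.
Proof.
rewrite /alpha_idx; apply: le_ereal_inf_tmp => _ [a Ha <-].
apply/lee_addgt0Pr => d d0; rewrite -EFinD; apply: ereal_inf_lbound.
by exists (a + d) => //; exact: alpha_g_f.
Qed.

Lemma beta_main : beta_idx g = beta_idx f.
Proof.
have E : beta_set g = beta_set f.
  apply/seteqP; split => b Hb.
    case: (leP b 0) => b0; first exact: beta_nonpos fmono' f_pos_ev b0.
    exact: beta_g_f.
  case: (leP b 0) => b0; first exact: beta_nonpos gmono' g_pos_ev b0.
  exact: beta_f_g.
by rewrite /beta_idx E.
Qed.

End Abstract.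

Theorem theorem4p4 (R : realType) (M : nat -> R) :
  weight_seq M ->
  ((alpha_idx (omegaM M) <= alpha_idx (nu_m (quot_seq M)))%E /\
   beta_idx (nu_m (quot_seq M)) = beta_idx (omegaM M)).
Proof.
move=> HM.
have Hg0 : forall y, 0 <= nu_m (quot_seq M) y by move=> y; exact: nu_ge0.
have Hf0 : forall y, 0 <= omegaM M y by move=> y; exact: omega_ge0.
have Hgm : forall x y, x <= y -> nu_m (quot_seq M) x <= nu_m (quot_seq M) y.
  by move=> x y; exact: nu_mono.
have Hl : forall y l, 0 < y -> 1 <= l ->
    omegaM M y + nu_m (quot_seq M) y * ln l <= omegaM M (l * y).
  by move=> y l; exact: H1l.
have Hu : forall y l, 0 < y -> 1 <= l ->
    omegaM M (l * y) <= omegaM M y + nu_m (quot_seq M) (l * y) * ln l.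
  by move=> y l; exact: H1u.
have Hinf : forall K, exists X, forall x, X < x -> K <= nu_m (quot_seq M) x.
  by move=> K; exact: nu_inf.
split; first exact: (@alpha_main R _ _ Hf0 Hgm Hl Hu Hinf).
exact: (@beta_main R _ _ Hg0 Hf0 Hgm Hl Hu Hinf).
Qed.
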